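(* Assume the setting and Algorithm 1 described in the context, with $|Q|\ge2$. Take parameters $P=\Theta(\frac{M^2}{\varepsilon_1^2}\log|Q|)$, $R=\Theta(\frac{M}{\varepsilon_1})$ and $T=\Theta(\frac{R}{\varepsilon_2}\log|Q|)$, with suitable absolute constants. Then with probability at least $7/8$ the distribution $\hat q$ returned by Algorithm 1 satisfies $\mathrm{Inv}(\hat q)\le\varepsilon_2$.
   Context: Setting. $X$ is a countable set and $p$ is a probability distribution on $X$. For a distribution $q$ on $X$, $q_x$ is the mass of $x$, $\mathrm{supp}(q)=\{x:q_x>0\}$, and $q(A)=\sum_{x\in A}q_x$. An invalidity function $\mathrm{Inv}:X\to\{0,1\}$ is given with $\mathrm{Inv}(x)=0$ for all $x\in\mathrm{supp}(p)$. For a distribution $q$, $\mathrm{Inv}(q)=\mathbb{E}_{x\sim q}[\mathrm{Inv}(x)]$. Fix $M>0$ and a monotone non-increasing function $L:[0,1]\to[0,M]$, and set $\mathrm{Loss}(q)=\mathbb{E}_{x\sim p}[L(q_x)]$. The learner may draw i.i.d. samples from $p$ and may query $\mathrm{Inv}(x)$ at any point $x$. $Q$ is a finite family of probability distributions on $X$ containing at least one $q$ with $\mathrm{Inv}(q)=0$. $q^*$ denotes a minimizer of $\mathrm{Loss}(q)$ over $\{q\in Q:\mathrm{Inv}(q)=0\}$. Oracle. For a finite multiset $X_P$ and a finite set $X_N\subseteq X$, $\mathrm{Oracle}(X_P,X_N)$ returns some $q\in Q$ minimizing $\frac1{|X_P|}\sum_{x\in X_P}L(q_x)$ among all $q\in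 Q$ with $\mathrm{supp}(q)\cap X_N=\emptyset$. Algorithm 1 (parameters $P,R,T$): (1) Draw a multiset $X_P$ of $P$ i.i.d. samples from $p$. Set $X_N=\emptyset$. (2) For $i=1,\dots,R$: let $q^i=\mathrm{Oracle}(X_P,X_N)$. Draw $T$ i.i.d. samples from $q^i$ and query the invalidity of each. If none is invalid, output $q^i$ and stop. Otherwise add all invalid ones to $X_N$. (3) If no output has been produced after $R$ rounds, choose $i$ uniformly from $\{1,\dots,R\}$ and let $A^i=\{x:\exists j>i,\ x\in\mathrm{supp}(q^j)\}$. Output the distribution $\hat q$ that draws $x\sim q^i$ and returns $x$ if $x\in A^i$, and otherwise returns a fixed point $x^*$ with $\mathrm{Inv}(x^* )=0$. *)

(* Defs.v *)
From Stdlib Require Import Reals ClassicalEpsilon.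
From mathcomp Require Import all_boot.
Set Implicit Arguments. Unset Strict Implicit. Unset Printing Implicit Defensive.
Local Open Scope R_scope.

Section Defs.
Variable X : countType.

(* Enumeration of X along pickle (pickle_inv is a sharp inverse: each x appears once). *)
Definition enumX (f : X -> R) (n : nat) : R :=
  match @pickle_inv X n with Some x => f x | None => 0 end.

(* sum over the countable set X (the series value when it converges; 0 otherwise —
   only ever applied to nonnegative summable families). *)
Definition sumX (f : X -> R) : R :=
  match excluded_middle_informative (exists l, infinite_sum (enumX f) l) with
  | left H => proj1_sig (constructive_indefinite_description _ H)
  | right _ => 0
  end.

Definition is_dist (q : X -> R) : Prop :=
  (forall x, 0 <= q x) /\ infinite_sum (enumX q) 1.

Definition Ex (q : X -> R) (g : X -> R) : R := sumX (fun x => q x * g x).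

Definition InvR (Inv : X -> bool) (x : X) : R := if Inv x then 1 else 0.
Definition InvD (Inv : X -> bool) (q : X -> R) : R := Ex q (InvR Inv).

Fixpoint iidE (q : X -> R) (n : nat) (F : seq X -> R) {struct n} : R :=
  match n with
  | O => F [::]
  | S n' => Ex q (fun x => iidE q n' (fun s => F (x :: s)))
  end.

Definition avoids (q : X -> R) (XN : seq X) : Prop :=
  forall x, x \in XN -> q x = 0.

Definition emp_loss (L : R -> R) (q : X -> R) (XP : seq X) : R :=
  / INR (size XP) * foldr (fun x acc => L (q x) + acc) 0 XP.

(* The family Q = {Qf i | i < k}; orc returns an index of Q. Oracle specification:
   returns a minimizer of the empirical loss among members avoiding XN
   (whenever such members exist). *)
Definition oracle_spec (L : R -> R) (k : nat) (Qf : nat -> X -> R)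
  (orc : seq X -> seq X -> nat) : Prop :=
  forall XP XN, (exists j, (j < k)%nat /\ avoids (Qf j) XN) ->
    [/\ (orc XP XN < k)%nat, avoids (Qf (orc XP XN)) XN &
        forall j, (j < k)%nat -> avoids (Qf j) XN ->
          emp_loss L (Qf (orc XP XN)) XP <= emp_loss L (Qf j) XP].

Definition posb (r : R) : bool := if Rlt_dec 0 r then true else false.

(* A^i = {x : exists j > i, x in supp(q^j)}, hist = [q^1; ...; q^R], i is 1-based *)
Definition inA (hist : seq (X -> R)) (i : nat) (x : X) : bool :=
  has (fun q => posb (q x)) (drop i hist).

Definition qhat (hist : seq (X -> R)) (i : nat) (xs : X) : X -> R :=
  let qi := nth (fun _ => 0) hist i.-1 in
  let kept := fun y => if inA hist i y then qi y else 0 in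
  fun x => kept x + (if x == xs then 1 - sumX kept else 0).

Definition ind (b : bool) : R := if b then 1 else 0.
Definition leb (a b : R) : bool := if Rle_dec a b then true else false.

(* Probability (over the uniform choice of i in {1..R}) that Inv(\hat q) <= eps2 *)
Definition final_prob (Inv : X -> bool) (xs : X) (eps2 : R) (nR : nat)
  (hist : seq (X -> R)) : R :=
  / INR nR * foldr (fun i acc => ind (leb (InvD Inv (qhat hist i xs)) eps2) + acc) 0
                   (iota 1 nR).

(* Probability of success of the remaining r rounds of step (2), given XP, current XN
   and the history of chosen distributions. *)
Fixpoint rounds_prob (Inv : X -> bool) (Qf : nat -> X -> R)
  (orc : seq X -> seq X -> nat) (xs : X) (eps2 : R) (nR T : nat) (XP : seq X)
  (r : nat) (XN : seq X) (hist : seq (X -> R)) {struct r} : R :=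
  match r with
  | O => final_prob Inv xs eps2 nR hist
  | S r' =>
      let qi := Qf (orc XP XN) in
      iidE qi T (fun s =>
        if all (fun x => ~~ Inv x) s then ind (leb (InvD Inv qi) eps2)
        else rounds_prob Inv Qf orc xs eps2 nR T XP r'
               (XN ++ filter Inv s) (rcons hist qi))
  end.

Definition success_prob (p : X -> R) (Inv : X -> bool) (Qf : nat -> X -> R)
  (orc : seq X -> seq X -> nat) (xs : X) (eps2 : R) (nP nR T : nat) : R :=
  iidE p nP (fun XP => rounds_prob Inv Qf orc xs eps2 nR T XP nR [::] [::]).

End Defs.

(* natural-number "ceiling" used to instantiate the Θ(.) parameters *)
Definition nceil (x : R) : nat := Z.to_nat (up x).

(* Main.v *)
From Stdlib Require Import Reals ZArith Lra Lia Classical ClassicalEpsilon FunctionalExtensionality List.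
From mathcomp Require Import all_boot zify.
Require Import Defs.
Set Implicit Arguments. Unset Strict Implicit. Unset Printing Implicit Defensive.
Local Open Scope R_scope.

Lemma sum_lin (u v : nat -> R) a b N :
  sum_f_R0 (fun n => a * u n + b * v n) N = a * sum_f_R0 u N + b * sum_f_R0 v N.
Proof. elim: N => [|N IH] /=; [ring| rewrite IH; ring]. Qed.

Lemma inf_sum_lin (u v : nat -> R) a b l1 l2 :
  infinite_sum u l1 -> infinite_sum v l2 ->
  infinite_sum (fun n => a * u n + b * v n) (a * l1 + b * l2).
Proof.
move=> H1 H2.
have Hc : forall c, Un_cv (fun _ : nat => c) c.
  move=> c e He; exists 0%nat => n _; rewrite /R_dist Rminus_diag Rabs_R0; lra.
have := CV_plus _ _ _ _ (CV_mult _ _ _ _ (Hc a) H1) (CV_mult _ _ _ _ (Hc b) H2).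
move=> H e He; have [N HN] := H e He; exists N => n Hn.
rewrite sum_lin; exact: HN.
Qed.

Lemma inf_sum_ge0 (u : nat -> R) l : (forall n, 0 <= u n) -> infinite_sum u l -> 0 <= l.
Proof.
move=> Hu Hl; apply: (Rle_trans _ (sum_f_R0 u 0)); first exact: cond_pos_sum.
exact: sum_incr.
Qed.

Lemma term_le_sum (u : nat -> R) n N : (forall m, 0 <= u m) -> (n <= N)%nat -> u n <= sum_f_R0 u N.
Proof.
move=> Hu; elim: N => [|N IH] Hn.
  have -> : n = 0%nat by lia. simpl; lra.
case: (Nat.eq_dec n N.+1) => [->|Hne] /=; first by have := cond_pos_sum u N Hu; lra.
have := IH ltac:(lia); have := Hu N.+1; lra.
Qed.

Lemma term_le_lim (u : nat -> R) n l : (forall m, 0 <= u m) -> infinite_sum u l -> u n <= l.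
Proof. move=> Hu Hl; apply: (Rle_trans _ (sum_f_R0 u n)); [exact: term_le_sum|exact: sum_incr]. Qed.

Section Ex.
Variable X : countType.

Lemma enumX_lin (f g : X -> R) a b n :
  enumX (fun x => a * f x + b * g x) n = a * enumX f n + b * enumX g n.
Proof. rewrite /enumX; case: pickle_inv => //; ring. Qed.

Lemma enumX_ext (f g : X -> R) : (forall x, f x = g x) -> enumX f = enumX g.
Proof. move=> H; apply: functional_extensionality => n; rewrite /enumX; case: pickle_inv => // x; exact: H. Qed.

Lemma enumX_ge0 (f : X -> R) n : (forall x, 0 <= f x) -> 0 <= enumX f n.
Proof. rewrite /enumX; case: pickle_inv => //; lra. Qed.

Lemma sumX_eq (f : X -> R) l : infinite_sum (enumX f) l -> sumX f = l.
Proof.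
move=> H; rewrite /sumX; case: excluded_middle_informative => [H'|[]]; last by exists l.
case: constructive_indefinite_description => l' /= Hl'; exact: uniqueness_sum Hl' H.
Qed.

Definition bnd (f : X -> R) := exists B, forall x, Rabs (f x) <= B.

Lemma summable (q f : X -> R) : is_dist q -> bnd f -> exists l, infinite_sum (enumX (fun x => q x * f x)) l.
Proof.
move=> [Hq0 Hq1] [B HB].
have HB0 : forall x, - B <= f x <= B by move=> x; have H := HB x; split_Rabs; lra.
have [l Hl] : {l | Un_cv (fun N => sum_f_R0 (enumX (fun x => q x * f x + B * q x)) N) l}.
  apply: (Rseries_CV_comp _ (enumX (fun x => (2 * B) * q x + 0 * q x))).
    move=> n; rewrite /enumX; case: pickle_inv => [x|]; last lra.
    have := HB0 x; have := Hq0 x; nra.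
  exists ((2*B) * 1 + 0 * 1).
  have -> : enumX (fun x => (2 * B) * q x + 0 * q x) = (fun n => (2*B) * enumX q n + 0 * enumX q n).
    by apply: functional_extensionality => n; rewrite enumX_lin.
  exact: inf_sum_lin.
exists (1 * l + (-B) * 1).
have -> : enumX (fun x => q x * f x) = (fun n => 1 * enumX (fun x => q x * f x + B * q x) n + (-B) * enumX q n).
  apply: functional_extensionality => n; rewrite /enumX; case: pickle_inv => [x|]; [ring|ring].
exact: inf_sum_lin.
Qed.

Lemma Ex_lim (q f : X -> R) : is_dist q -> bnd f -> infinite_sum (enumX (fun x => q x * f x)) (Ex q f).
Proof. move=> Hq Hf; have [l Hl] := summable Hq Hf; by rewrite /Ex (sumX_eq Hl). Qed.

Lemma bnd_lin (f g : X -> R) a b : bnd f -> bnd g -> bnd (fun x => a * f x + b * g x).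
Proof.
move=> [B1 H1] [B2 H2]; exists (Rabs a * B1 + Rabs b * B2) => x.
apply: (Rle_trans _ _ _ (Rabs_triang _ _)); rewrite !Rabs_mult.
apply: Rplus_le_compat; apply: Rmult_le_compat_l; auto using Rabs_pos.
Qed.

Lemma bnd_cst c : bnd (fun _ : X => c).
Proof. exists (Rabs c) => _; lra. Qed.

Lemma Ex_lin (q f g : X -> R) a b : is_dist q -> bnd f -> bnd g ->
  Ex q (fun x => a * f x + b * g x) = a * Ex q f + b * Ex q g.
Proof.
move=> Hq Hf Hg; rewrite {1}/Ex; apply: sumX_eq.
have -> : enumX (fun x => q x * (a * f x + b * g x)) =
   (fun n => a * enumX (fun x => q x * f x) n + b * enumX (fun x => q x * g x) n).
  apply: functional_extensionality => n; rewrite -enumX_lin; f_equal; apply: functional_extensionality => x; ring.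
apply: inf_sum_lin; exact: Ex_lim.
Qed.

Lemma Ex_cst (q : X -> R) c : is_dist q -> Ex q (fun _ => c) = c.
Proof.
move=> [Hq0 Hq1]; rewrite /Ex; apply: sumX_eq.
have -> : enumX (fun x => q x * c) = (fun n => c * enumX q n + 0 * enumX q n).
  apply: functional_extensionality => n; rewrite -enumX_lin; f_equal; apply: functional_extensionality => x; ring.
have := inf_sum_lin c 0 Hq1 Hq1; by rewrite Rmult_1_r Rmult_0_l Rplus_0_r.
Qed.

Lemma Ex_ge0 (q f : X -> R) : is_dist q -> bnd f -> (forall x, 0 < q x -> 0 <= f x) -> 0 <= Ex q f.
Proof.
move=> Hq Hf Hpos; apply: (inf_sum_ge0 _ (Ex_lim Hq Hf)) => n.
apply: enumX_ge0 => x; case: (proj1 Hq x) => H; last by rewrite -H; lra.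
have := Hpos x H; nra.
Qed.

Lemma Ex_mono (q f g : X -> R) : is_dist q -> bnd f -> bnd g ->
  (forall x, 0 < q x -> f x <= g x) -> Ex q f <= Ex q g.
Proof.
move=> Hq Hf Hg H.
have H0 : 0 <= Ex q (fun x => 1*g x + (-1)*f x).
  apply: Ex_ge0 => //; [exact: bnd_lin | move=> x Hx; have := H x Hx; lra].
rewrite Ex_lin // in H0; lra.
Qed.

Lemma Ex_ext (q f g : X -> R) : (forall x, f x = g x) -> Ex q f = Ex q g.
Proof. by move=> H; have -> : f = g by apply: functional_extensionality. Qed.

Lemma Ex_bounds (q f : X -> R) a b : is_dist q -> (forall x, a <= f x <= b) -> a <= Ex q f <= b.
Proof.
move=> Hq H.
have Hf : bnd f by exists (Rabs a + Rabs b) => x; have := H x; move=> [h1 h2]; apply: Rabs_le; split_Rabs; lra.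
split.
  by rewrite -{1}(Ex_cst a Hq); apply: Ex_mono => //; [exact: bnd_cst| move=> x _; case: (H x)].
by rewrite -(Ex_cst b Hq); apply: Ex_mono => //; [exact: bnd_cst| move=> x _; case: (H x)].
Qed.

End Ex.


Section Iid.
Variable X : countType.
Variable q : X -> R.
Hypothesis Hq : is_dist q.

Definition bndS (F : seq X -> R) := exists B, forall s, Rabs (F s) <= B.

Lemma iid_bounds n (F : seq X -> R) a b : (forall s, a <= F s <= b) -> a <= iidE q n F <= b.
Proof.
elim: n F => [|n IH] F H /=; first exact: H.
apply: Ex_bounds => // x; apply: IH => s; exact: H.
Qed.

Lemma iid_bnd n (F : seq X -> R) : bndS F -> bnd (fun y : X => iidE q n (fun s => F (y :: s))).
Proof.
move=> [B HB]; exists B => y; apply: Rabs_le; apply: iid_bounds => s.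
have H := HB (y :: s); split_Rabs; lra.
Qed.

Lemma bndS_lin (F G : seq X -> R) a b : bndS F -> bndS G -> bndS (fun s => a * F s + b * G s).
Proof.
move=> [B1 H1] [B2 H2]; exists (Rabs a * B1 + Rabs b * B2) => x.
apply: (Rle_trans _ _ _ (Rabs_triang _ _)); rewrite !Rabs_mult.
apply: Rplus_le_compat; apply: Rmult_le_compat_l; auto using Rabs_pos.
Qed.

Lemma bndS_of (F : seq X -> R) a b : (forall s, a <= F s <= b) -> bndS F.
Proof. move=> H; exists (Rabs a + Rabs b) => s; have := H s => -[h1 h2]; apply: Rabs_le; split_Rabs; lra. Qed.

Lemma iid_lin n (F G : seq X -> R) a b : bndS F -> bndS G ->
  iidE q n (fun s => a * F s + b * G s) = a * iidE q n F + b * iidE q n G.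
Proof.
elim: n F G => [|n IH] F G HF HG //=.
rewrite (@Ex_ext _ q _ (fun x => a * iidE q n (fun s => F (x :: s)) + b * iidE q n (fun s => G (x :: s)))).
  apply: Ex_lin => //; exact: iid_bnd.
move=> x; apply: IH.
  by case: HF => B HB; exists B.
by case: HG => B HB; exists B.
Qed.

Lemma iid_cst n c : iidE q n (fun _ => c) = c.
Proof.
elim: n => [|n IH] //=; rewrite (@Ex_ext _ q _ (fun _ => c)); first exact: Ex_cst.
by move=> x; rewrite IH.
Qed.

Definition supS (s : seq X) := all (fun x => posb (q x)) s.

Lemma posbP r : posb r = true <-> 0 < r.
Proof. rewrite /posb; case: Rlt_dec => //. Qed.

Lemma iid_mono n (F G : seq X -> R) : bndS F -> bndS G ->
  (forall s, supS s -> F s <= G s) -> iidE q n F <= iidE q n G.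
Proof.
elim: n F G => [|n IH] F G HF HG H /=; first exact: H.
apply: Ex_mono => //; try exact: iid_bnd.
move=> x Hx; apply: IH.
- by case: HF => B HB; exists B.
- by case: HG => B HB; exists B.
move=> s Hs; apply: H; rewrite /supS /=; apply/andP; split => //; exact/posbP.
Qed.

Definition ind' := ind.

Lemma ind_bounds b : 0 <= ind b <= 1.
Proof. case: b => /=; lra. Qed.

Lemma iid_scale n (F : seq X -> R) c : bndS F -> iidE q n (fun s => c * F s) = c * iidE q n F.
Proof.
move=> HF; have E := @iid_lin n F (fun _ => 0) c 0 HF (bndS_of (a:=0) (b:=0) (fun _ => conj (Rle_refl 0) (Rle_refl 0))).
transitivity (c * iidE q n F + 0 * iidE q n (fun _ => 0)); last ring.
rewrite -E; f_equal; apply: functional_extensionality => s; ring.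
Qed.

Lemma Ex_scale (f : X -> R) c : bnd f -> Ex q (fun x => c * f x) = c * Ex q f.
Proof.
move=> Hf; have E := @Ex_lin _ q f (fun _ => 0) c 0 Hq Hf (bnd_cst _ 0).
transitivity (c * Ex q f + 0 * Ex q (fun _ => 0)); last ring.
rewrite -E; apply: Ex_ext => x; ring.
Qed.

Lemma ind_and a b : ind (a && b) = ind a * ind b.
Proof. case: a; case: b => /=; ring. Qed.

Lemma bnd_ind (P : pred X) : bnd (fun x => ind (P x)).
Proof. exists 1 => x; have := ind_bounds (P x); move=> [h1 h2]; apply: Rabs_le; lra. Qed.

Lemma bndS_ind (P : pred (seq X)) : bndS (fun s => ind (P s)).
Proof. apply: (bndS_of (a:=0) (b:=1)) => s; exact: ind_bounds. Qed.

Lemma iid_pow n (P : pred X) :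
  iidE q n (fun s => ind (all P s)) = (Ex q (fun x => ind (P x))) ^ n.
Proof.
elim: n => [|n IH] /=; first by [].
rewrite (@Ex_ext _ q _ (fun x => (Ex q (fun x => ind (P x)) ^ n) * ind (P x))).
  by rewrite Ex_scale; [ring | exact: bnd_ind].
move=> x.
have -> : (fun s => ind (all P (x :: s))) = (fun s => ind (P x) * ind (all P s)).
  by apply: functional_extensionality => s; rewrite /= ind_and.
rewrite iid_scale ?IH; [ring | exact: bndS_ind].
Qed.

Lemma iid_sum n (I : Type) (l : seq I) (F : I -> seq X -> R) :
  (forall i, bndS (F i)) ->
  iidE q n (fun s => foldr (fun i acc => F i s + acc) 0 l) = foldr (fun i acc => iidE q n (F i) + acc) 0 l.
Proof.
move=> HF; elim: l => [|i l IH] /=; first exact: iid_cst.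
have Hb : bndS (fun s => foldr (fun i acc => F i s + acc) 0 l).
  elim: l {IH} => [|j l [B HB]] /=; first by exists 0 => s; rewrite Rabs_R0; lra.
  case: (HF j) => B' HB'; exists (B' + B) => s; apply: (Rle_trans _ _ _ (Rabs_triang _ _)).
  exact: Rplus_le_compat.
rewrite -IH -[X in _ = _ + X]Rmult_1_l -[X in _ = X + _]Rmult_1_l -iid_lin //.
by f_equal; apply: functional_extensionality => s; ring.
Qed.

Lemma Ex_sum (I : Type) (l : seq I) (F : I -> X -> R) :
  (forall i, bnd (F i)) ->
  Ex q (fun x => foldr (fun i acc => F i x + acc) 0 l) = foldr (fun i acc => Ex q (F i) + acc) 0 l.
Proof.
move=> HF; elim: l => [|i l IH] /=; first exact: Ex_cst.
have Hb : bnd (fun x => foldr (fun i acc => F i x + acc) 0 l).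
  elim: l {IH} => [|j l [B HB]] /=; first by exists 0 => s; rewrite Rabs_R0; lra.
  case: (HF j) => B' HB'; exists (B' + B) => s; apply: (Rle_trans _ _ _ (Rabs_triang _ _)).
  exact: Rplus_le_compat.
rewrite -IH -[X in _ = _ + X]Rmult_1_l -[X in _ = X + _]Rmult_1_l -Ex_lin //.
by apply: Ex_ext => x; ring.
Qed.
End Iid.


Lemma in_In (T : eqType) (x : T) s : x \in s -> List.In x s.
Proof. elim: s => [|y s IH] //=; rewrite in_cons => /orP [/eqP ->|H]; [by left|right; exact: IH]. Qed.

Lemma foldr_bnd (I : Type) (l : seq I) (f : I -> R) B :
  (forall i, List.In i l -> 0 <= f i <= B) ->
  0 <= foldr (fun i acc => f i + acc) 0 l <= INR (size l) * B.
Proof.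
elim: l => [|i l IH] H; first (simpl; lra).
have := H i (or_introl erefl); have := IH (fun j Hj => H j (or_intror Hj)).
change (size (i :: l)) with (size l).+1; rewrite S_INR /=; lra.
Qed.

Lemma foldr_ge0 (I : Type) (l : seq I) (f : I -> R) :
  (forall i, 0 <= f i) -> 0 <= foldr (fun i acc => f i + acc) 0 l.
Proof. move=> H; elim: l => [|i l IH] /=; [lra| have := H i; lra]. Qed.

Lemma foldr_ge (I : eqType) (l : seq I) (f : I -> R) j :
  (forall i, 0 <= f i) -> j \in l -> f j <= foldr (fun i acc => f i + acc) 0 l.
Proof.
move=> H0; elim: l => [|i l IH] //=; rewrite in_cons => /orP [/eqP ->|Hj].
  have := foldr_ge0 l H0; lra.
have := IH Hj; have := H0 i; lra.
Qed.

Lemma foldr_mono (I : Type) (l : seq I) (f g : I -> R) :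
  (forall i, f i <= g i) -> foldr (fun i acc => f i + acc) 0 l <= foldr (fun i acc => g i + acc) 0 l.
Proof. move=> H; elim: l => [|i l IH] /=; [lra| have := H i; lra]. Qed.

Lemma foldr_one (I : Type) (l : seq I) (f : I -> bool) :
  (forall i, List.In i l -> f i = true) -> foldr (fun i acc => ind (f i) + acc) 0 l = INR (size l).
Proof.
elim: l => [|i l IH] H //; change (size (i :: l)) with (size l).+1; rewrite S_INR /= IH ?H /=; [ring| by left| move=> j Hj; apply: H; by right].
Qed.

Lemma INR_nceil x : 0 < x -> x <= INR (nceil x).
Proof.
move=> Hx; rewrite /nceil; have [h1 h2] := archimed x.
have Hz : (0 <= up x)%Z by apply: le_0_IZR; lra.
rewrite INR_IZR_INZ Z2Nat.id //; lra.
Qed.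

Lemma count_lt (T' : eqType) (a b : pred T') l y : (forall z, a z -> b z) -> y \in l -> b y -> ~~ a y ->
  (count a l < count b l)%N.
Proof.
move=> Hab; elim: l => [|z l IH] //=; rewrite in_cons => /orP [/eqP <-|Hy] Hb Ha.
  rewrite Hb (negbTE Ha) /=; have := @sub_count _ a b Hab l; lia.
have := IH Hy Hb Ha; case Haz: (a z); first by rewrite (Hab z Haz) /=; lia.
case: (b z) => /=; lia.
Qed.

Lemma leb_false a c : leb a c = false -> c < a.
Proof. rewrite /leb; case: Rle_dec => // H _; lra. Qed.

Definition Req_bool (a b : R) : bool := if Req_EM_T a b then true else false.

Section Main.
Variable X : countType.
Variable Inv : X -> bool.
Variable L : R -> R.
Variable k : nat.
Variable Qf : nat -> X -> R.
Variable orc : seq X -> seq X -> nat.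
Variable xs : X.
Variable eps2 : R.
Variables nR T : nat.
Variable XP : seq X.
Hypothesis HQ : forall i, (i < k)%N -> is_dist (Qf i).
Hypothesis Hstar : exists i, (i < k)%N /\ InvD Inv (Qf i) = 0.
Hypothesis Horc : oracle_spec L k Qf orc.
Hypothesis Hxs : Inv xs = false.
Hypothesis He2 : 0 < eps2.
Hypothesis HnR : (1 <= nR)%N.

Definition d0 : X -> R := fun _ => 0.
Definition alive (XN : seq X) (j : nat) : bool := all (fun x => Req_bool (Qf j x) 0) XN.
Definition mass (q q' : X -> R) : R := Ex q (fun x => ind (Inv x && posb (q' x))).
Definition good q q' : Prop := mass q q' <= eps2 / INR nR.
Definition cnt XN : nat := count (alive XN) (iota 0 k).

Lemma aliveP XN j : alive XN j <-> avoids (Qf j) XN.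
Proof.
rewrite /alive /avoids; split.
  move/allP => H x /H; rewrite /Req_bool; by case: Req_EM_T.
move=> H; apply/allP => x /H; rewrite /Req_bool; by case: Req_EM_T.
Qed.

Lemma InvD0_zero q x : is_dist q -> InvD Inv q = 0 -> Inv x -> q x = 0.
Proof.
move=> Hq H0 Hx.
have Hl := Ex_lim Hq (bnd_ind (fun x => Inv x)).
have Hl' : infinite_sum (enumX (fun x => q x * InvR Inv x)) 0.
  rewrite /InvD in H0; rewrite -H0; exact: Hl.
have := term_le_lim (pickle x) _ Hl'.
rewrite /enumX pickleK_inv /InvR Hx => H.
have : q x * 1 <= 0.
  apply: H => n; apply: enumX_ge0 => y; rewrite /InvR; case: (Inv y); have := proj1 Hq y; lra.
have := proj1 Hq x; lra.
Qed.

Definition allInv (XN : seq X) := all Inv XN.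

Lemma orc_ok XN : allInv XN -> (orc XP XN < k)%N /\ alive XN (orc XP XN).
Proof.
move=> HXN.
have Hex : exists j, (j < k)%N /\ avoids (Qf j) XN.
  case: Hstar => i [Hi H0]; exists i; split => // x Hx.
  apply: InvD0_zero (HQ Hi) H0 _; exact: (allP HXN).
case: (Horc XP Hex) => H1 H2 _; split => //; exact/aliveP.
Qed.

Definition rho := Rmax 0 (1 - eps2 / INR nR).
Definition dl := rho ^ T.
Definition cc := dl * (INR k + 1).

Lemma INR_nR : 1 <= INR nR.
Proof. have := le_INR 1 nR; simpl; apply; apply/leP; exact: HnR. Qed.

Lemma rho_ge0 : 0 <= rho.
Proof. exact: Rmax_l. Qed.

Lemma dl_ge0 : 0 <= dl.
Proof. apply: pow_le; exact: rho_ge0. Qed.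

Lemma cc_ge0 : 0 <= cc.
Proof. rewrite /cc; have := dl_ge0; have := pos_INR k; nra. Qed.

Lemma eps_div_le : eps2 / INR nR <= eps2.
Proof.
have H1 := INR_nR.
have : eps2 / INR nR * INR nR = eps2 by field; lra.
have : 0 < eps2 / INR nR by apply: Rdiv_lt_0_compat; lra.
nra.
Qed.

Lemma pow_dl z : 0 <= z <= 1 -> eps2 / INR nR < z -> (1 - z) ^ T <= dl.
Proof.
move=> Hz Hz'; apply: pow_incr; split; first lra.
apply: (Rle_trans _ (1 - eps2 / INR nR)); [lra | exact: Rmax_r].
Qed.

Definition RP r XN hist := rounds_prob Inv Qf orc xs eps2 nR T XP r XN hist.

Lemma final_bounds hist : 0 <= final_prob Inv xs eps2 nR hist <= 1.
Proof.
rewrite /final_prob.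
have H := @foldr_bnd _ (iota 1 nR) (fun i => ind (leb (InvD Inv (qhat hist i xs)) eps2)) 1 (fun i _ => ind_bounds _).
rewrite size_iota in H.
have H1 := INR_nR.
have Hi : 0 < / INR nR by apply: Rinv_0_lt_compat; lra.
split; first nra.
have : / INR nR * INR nR = 1 by field; lra.
nra.
Qed.

Lemma allInv_cat XN s : allInv XN -> allInv (XN ++ filter Inv s).
Proof. by rewrite /allInv all_cat => ->; rewrite filter_all. Qed.

Lemma RP_bounds r XN hist : allInv XN -> 0 <= RP r XN hist <= 1.
Proof.
elim: r XN hist => [|r IH] XN hist HXN /=; first exact: final_bounds.
have [Ho _] := orc_ok HXN.
apply: (iid_bounds (HQ Ho)) => s.
case: all; first exact: ind_bounds.
apply: IH; exact: allInv_cat.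
Qed.

Definition Inv_ok XN hist : Prop :=
 [/\ (forall a, (a < size hist)%N -> is_dist (nth d0 hist a)),
     (forall a, (a < size hist)%N -> forall q', List.In q' (drop a.+1 hist) -> good (nth d0 hist a) q') &
     (forall a, (a < size hist)%N -> forall j, (j < k)%N -> alive XN j -> good (nth d0 hist a) (Qf j))].

Lemma In_in (T' : eqType) (x : T') s : List.In x s -> x \in s.
Proof. elim: s => [|y s IH] //= [->|H]; rewrite in_cons ?eqxx //; by rewrite IH ?orbT. Qed.

Lemma ind_has b (x : X) (l : seq (X -> R)) :
  ind (b && has (fun q => posb (q x)) l) <= foldr (fun q' acc => ind (b && posb (q' x)) + acc) 0 l.
Proof.
elim: l => [|q l IH] /=; first by case: b => /=; lra.
have H0 := foldr_ge0 l (fun q' => proj1 (ind_bounds (b && posb (q' x)))).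
case: b IH H0 => /=; last lra.
case: posb => /=; lra.
Qed.

Lemma qhat_bound XN hist i : size hist = nR -> Inv_ok XN hist -> (1 <= i <= nR)%N ->
  InvD Inv (qhat hist i xs) <= eps2.
Proof.
move=> Hs [Hd Hg _] Hi.
set a := i.-1.
have Ha : (a < size hist)%N by rewrite Hs /a; lia.
have Hia : i = a.+1 by rewrite /a; lia.
set qa := nth d0 hist a.
have Hqa : is_dist qa := Hd a Ha.
have E1 : InvD Inv (qhat hist i xs) = Ex qa (fun x => ind (Inv x && inA hist i x)).
  rewrite /InvD /Ex; f_equal; apply: functional_extensionality => x.
  rewrite /qhat /InvR /= -/d0 -/a -/qa.
  case Hx: (Inv x) => /=; last ring.
  have -> : (x == xs) = false by apply/eqP => E; rewrite E Hxs in Hx.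
  case: inA; rewrite /ind; ring.
rewrite E1.
set l := drop i hist.
have Hb : bnd (fun x => foldr (fun q' acc => ind (Inv x && posb (q' x)) + acc) 0 l).
  exists (INR (size l) * 1) => x; apply: Rabs_le.
  have := @foldr_bnd _ l (fun q' => ind (Inv x && posb (q' x))) 1 (fun _ _ => ind_bounds _); lra.
apply: (Rle_trans _ _ _ (Ex_mono Hqa (bnd_ind _) Hb (fun x _ => ind_has (Inv x) x l))).
rewrite (@Ex_sum _ _ Hqa _ l (fun q' x => ind (Inv x && posb (q' x)))); last by move=> q'; exact: bnd_ind.
have H := @foldr_bnd _ l (fun q' => mass qa q') (eps2 / INR nR).
have := H (fun q' Hq' => conj (proj1 (@Ex_bounds _ _ _ 0 1 Hqa (fun x => ind_bounds _))) (Hg a Ha q' ltac:(by rewrite -Hia))).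
move=> [_ H2]; apply: (Rle_trans _ _ _ H2).
have Hsz : (size l <= nR)%N by rewrite /l size_drop Hs; lia.
have Hsz' : INR (size l) <= INR nR by apply: le_INR; apply/leP.
have H1 := INR_nR.
have : INR nR * (eps2 / INR nR) = eps2 by field; lra.
have : 0 < eps2 / INR nR by apply: Rdiv_lt_0_compat; lra.
nra.
Qed.

Lemma final_one XN hist : size hist = nR -> Inv_ok XN hist -> final_prob Inv xs eps2 nR hist = 1.
Proof.
move=> Hs Hok; rewrite /final_prob foldr_one.
  rewrite size_iota; apply: Rinv_l; have := INR_nR; lra.
move=> i /In_in; rewrite mem_iota => Hi.
rewrite /leb; case: Rle_dec => // H; exfalso; apply: H; apply: (qhat_bound Hs Hok); lia.
Qed.

Lemma iid_A (q : X -> R) (b : bool) (P : pred X) : is_dist q ->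
  iidE q T (fun s => ind (b && all (fun x => ~~ P x) s)) = ind b * (1 - Ex q (fun x => ind (P x))) ^ T.
Proof.
move=> Hq.
have -> : (fun s => ind (b && all (fun x => ~~ P x) s)) = (fun s => ind b * ind (all (fun x => ~~ P x) s)).
  by apply: functional_extensionality => s; rewrite ind_and.
rewrite iid_scale //; last exact: bndS_ind.
rewrite iid_pow //; f_equal; f_equal.
rewrite (@Ex_ext _ q _ (fun x => 1 * 1 + (-1) * ind (P x))); last by move=> x; case: (P x); rewrite /ind /=; ring.
rewrite Ex_lin //; [rewrite Ex_cst //; ring| exact: bnd_cst| exact: bnd_ind].
Qed.

Lemma A_le (q : X -> R) (b : bool) (P : pred X) : is_dist q ->
  (b -> eps2 / INR nR < Ex q (fun x => ind (P x))) ->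
  0 <= ind b * (1 - Ex q (fun x => ind (P x))) ^ T <= dl.
Proof.
move=> Hq Hb; have Hd := dl_ge0.
have [h0 h1] := @Ex_bounds _ _ (fun x => ind (P x)) 0 1 Hq (fun x => ind_bounds _).
case: b Hb => Hb; [have -> : ind true = 1 by [] | have -> : ind false = 0 by []]; last (rewrite Rmult_0_l; lra).
rewrite Rmult_1_l; split; first (apply: pow_le; lra).
apply: pow_dl => //; exact: Hb.
Qed.

Lemma main r : forall XN hist, (size hist + r)%N = nR -> allInv XN -> Inv_ok XN hist ->
  1 - cc * INR (cnt XN) <= RP r XN hist.
Proof.
elim: r => [|r IH] XN hist Hs HXN Hok.
  rewrite /RP /= (final_one (XN := XN)) //; last by rewrite addn0 in Hs.
  have := cc_ge0; have := pos_INR (cnt XN); nra.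
rewrite /RP /=.
have [Hj0 Halj0] := orc_ok HXN.
set j0 := orc XP XN in Hj0 Halj0 *.
set q := Qf j0.
have Hq : is_dist q := HQ Hj0.
set V := (fun s => _).
set A1 := fun s => (~~ leb (InvD Inv q) eps2) && all (fun x => ~~ Inv x) s.
set A2 := fun j s => (alive XN j && ~~ leb (mass q (Qf j)) (eps2 / INR nR)) &&
                      all (fun x => ~~ (Inv x && posb (Qf j x))) s.
set Sm := fun s => foldr (fun j acc => ind (A2 j s) + acc) 0 (iota 0 k).
set a0 := 1 - cc * INR (cnt XN) + cc.
have HSm : forall s, 0 <= Sm s <= INR (size (iota 0 k)) * 1.
  move=> s; apply: foldr_bnd => j _; exact: ind_bounds.
have bSm : bndS Sm by apply: (bndS_of (a := 0) (b := INR (size (iota 0 k)) * 1)).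
have bA1 : bndS (fun s => ind (A1 s)) by exact: bndS_ind.
have bH : bndS (fun s => ind (A1 s) + Sm s).
  have := bndS_lin 1 1 bA1 bSm => -[B HB]; exists B => s; have := HB s; by rewrite !Rmult_1_l.
have bV : bndS V.
  apply: (bndS_of (a := 0) (b := 1)) => s; rewrite /V; case: all; first exact: ind_bounds.
  apply: RP_bounds; exact: allInv_cat.
have EG : iidE q T (fun s => a0 * 1 + (-1) * (ind (A1 s) + Sm s)) =
          a0 - (iidE q T (fun s => ind (A1 s)) + iidE q T Sm).
  rewrite (@iid_lin _ q Hq T (fun _ => 1) (fun s => ind (A1 s) + Sm s) a0 (-1)) //; last first.
    by apply: (bndS_of (a := 1) (b := 1)) => _; lra.
  rewrite (iid_cst Hq).
  have -> : (fun s => ind (A1 s) + Sm s) = (fun s => 1 * ind (A1 s) + 1 * Sm s).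
    by apply: functional_extensionality => s; ring.
  rewrite (@iid_lin _ q Hq T (fun s => ind (A1 s)) Sm 1 1) //; ring.
have EA1 : iidE q T (fun s => ind (A1 s)) <= dl.
  rewrite /A1 (iid_A _ _ Hq).
  have HA := @A_le q (~~ leb (InvD Inv q) eps2) Inv Hq.
  apply: (proj2 (HA _)) => /negbTE /leb_false H.
  have H' : eps2 < Ex q (fun x => ind (Inv x)) := H.
  have := eps_div_le; lra.
have ESm : iidE q T Sm <= INR k * dl.
  rewrite /Sm (iid_sum Hq); last by move=> j; exact: bndS_ind.
  have := @foldr_bnd _ (iota 0 k) (fun j => iidE q T (fun s => ind (A2 j s))) dl.
  rewrite size_iota => HF; apply: (proj2 (HF _)) => j _; rewrite /A2 (iid_A _ _ Hq).
  apply: (@A_le q _ (fun x => Inv x && posb (Qf j x)) Hq) => /andP [_ /negbTE /leb_false H]; exact: H.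
have Hcnt : 1 <= INR (cnt XN).
  have : (0 < cnt XN)%N.
    rewrite /cnt -has_count; apply/hasP; exists j0 => //; rewrite mem_iota; lia.
  move=> H; have := le_INR 1 (cnt XN); simpl; apply; apply/leP; exact: H.
have Hcc := cc_ge0.
have HV : forall s, supS q s -> a0 * 1 + (-1) * (ind (A1 s) + Sm s) <= V s.
  move=> s Hsup.
  have HA10 := proj1 (ind_bounds (A1 s)). have [HS0 _] := HSm s.
  rewrite /V /=.
  case Hall: (all (fun x => ~~ Inv x) s).
    case Hl: (leb (InvD Inv q) eps2).
      have -> : ind true = 1 by []. rewrite /a0; nra.
    have HA : A1 s = true by rewrite /A1 Hl Hall.
    rewrite HA; have -> : ind true = 1 by []; have -> : ind false = 0 by []; rewrite /a0; nra.
  move/negbT: Hall; rewrite -has_predC => /hasP [x Hxs' /negPn HIx].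
  have Hqx : 0 < q x by have := allP Hsup x Hxs'; move/posbP.
  set XN' := XN ++ filter Inv s.
  have HXN' : allInv XN' := allInv_cat s HXN.
  have Hsub : forall j, alive XN' j -> alive XN j by move=> j; rewrite /alive all_cat => /andP [].
  have Hdead : ~~ alive XN' j0.
    apply/negP => /aliveP H; have : q x = 0 by apply: H; rewrite mem_cat mem_filter HIx Hxs' orbT.
    lra.
  have Hj0in : j0 \in iota 0 k by rewrite mem_iota; lia.
  have Hlt : (cnt XN' < cnt XN)%N := count_lt Hsub Hj0in Halj0 Hdead.
  have Hlt' : INR (cnt XN') + 1 <= INR (cnt XN).
    rewrite -S_INR; apply: le_INR; apply/leP; exact: Hlt.
  have HV0 := RP_bounds r (rcons hist q) HXN'.
  rewrite /RP in HV0.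
  case: (classic (forall j, (j < k)%N -> alive XN' j -> good q (Qf j))) => Hgood.
    have Hok' : Inv_ok XN' (rcons hist q).
      case: Hok => Hd Hg Hc; split.
      - move=> a; rewrite size_rcons nth_rcons => Ha; case: ifP => Ha'; first exact: Hd.
        have -> : (a == size hist) = true by apply/eqP; lia.
        exact: Hq.
      - move=> a; rewrite size_rcons nth_rcons => Ha q'; case: ifP => Ha'.
          rewrite (drop_rcons Ha') -cats1 => Hin0; case: (in_app_or _ _ _ Hin0) => [Hin|[Hqq|[]]]; first exact: Hg.
          rewrite -Hqq.
          exact: (Hc a Ha' j0 Hj0 Halj0).
        rewrite drop_oversize; first by [].
        rewrite size_rcons; lia.
      - move=> a; rewrite size_rcons nth_rcons => Ha j Hj Haj; case: ifP => Ha'.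
          exact: (Hc a Ha' j Hj (Hsub j Haj)).
        have -> : (a == size hist) = true by apply/eqP; lia.
        exact: Hgood j Hj Haj.
    have := IH XN' (rcons hist q) ltac:(rewrite size_rcons; lia) HXN' Hok'.
    rewrite /RP => HI; rewrite /a0; nra.
  have [j [Hj [Haj Hnj]]] : exists j, (j < k)%N /\ alive XN' j /\ ~ good q (Qf j).
    apply: NNPP => H; apply: Hgood => j Hj Ha; apply: NNPP => Hn; apply: H; exists j; tauto.
  have HA2 : A2 j s = true.
    rewrite /A2 (Hsub j Haj) /=; apply/andP; split.
      by rewrite /leb; case: Rle_dec.
    apply/allP => y Hy; apply/negP => /andP [HIy Hpy].
    have : Qf j y = 0 by apply: (proj1 (aliveP _ _) Haj); rewrite mem_cat mem_filter HIy Hy orbT.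
    move: Hpy; rewrite /posb; case: Rlt_dec => // Hlt0 _ Heq; lra.
  have Hjin : j \in iota 0 k by rewrite mem_iota; lia.
  have := @foldr_ge _ (iota 0 k) (fun j => ind (A2 j s)) j (fun i => proj1 (ind_bounds _)) Hjin.
  rewrite HA2 -/(Sm s); have -> : ind true = 1 by [].
  move=> H1; rewrite /a0; nra.
apply: (Rle_trans _ (iidE q T (fun s => a0 * 1 + (-1) * (ind (A1 s) + Sm s)))).
  rewrite EG /a0 /cc; lra.
apply: (iid_mono Hq) => //.
exact: bndS_lin (bndS_of (a := 1) (b := 1) (fun _ => conj (Rle_refl 1) (Rle_refl 1))) bH.
Qed.
End Main.


Lemma exp_pow' y n : exp y ^ n = exp (INR n * y).
Proof.
elim: n => [|n IH]; first by rewrite /= Rmult_0_l exp_0.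
rewrite S_INR -[exp y ^ n.+1]/(exp y * exp y ^ n) IH -exp_plus; f_equal; ring.
Qed.

Lemma exp_le a b : a <= b -> exp a <= exp b.
Proof. case=> [H|->]; [left; exact: exp_increasing | lra]. Qed.

Theorem lemma1 :
  exists cP cR cT : R, 0 < cP /\ 0 < cR /\ 0 < cT /\
  forall (X : countType) (p : X -> R) (Inv : X -> bool) (M : R) (L : R -> R)
         (k : nat) (Qf : nat -> X -> R) (orc : seq X -> seq X -> nat) (xs : X)
         (eps1 eps2 : R),
    is_dist p ->
    (forall x, 0 < p x -> Inv x = false) ->
    0 < M ->
    (forall u, 0 <= u <= 1 -> 0 <= L u <= M) ->
    (forall u v, 0 <= u -> u <= v -> v <= 1 -> L v <= L u) ->
    (2 <= k)%nat ->
    (forall i, (i < k)%nat -> is_dist (Qf i)) ->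
    (forall i j, (i < k)%nat -> (j < k)%nat -> Qf i = Qf j -> i = j) ->
    (exists i, (i < k)%nat /\ InvD Inv (Qf i) = 0) ->
    oracle_spec L k Qf orc ->
    Inv xs = false ->
    0 < eps1 -> 0 < eps2 ->
    let nP := nceil (cP * M ^ 2 / eps1 ^ 2 * ln (INR k)) in
    let nR := nceil (cR * M / eps1) in
    let T := nceil (cT * INR nR / eps2 * ln (INR k)) in
    7 / 8 <= success_prob p Inv Qf orc xs eps2 nP nR T.
Proof.
exists 1, 1, 6; split; [lra|split; [lra|split; [lra|]]].
move=> X p Inv M L k Qf orc xs eps1 eps2 Hp Hpv HM HL HLm Hk HQ Hinj Hstar Horc Hxs He1 He2 nP nR T.
have HnRr : 1 * M / eps1 <= INR nR by rewrite /nR; apply: INR_nceil; apply: Rdiv_lt_0_compat; lra.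
have HMe : 0 < 1 * M / eps1 by apply: Rdiv_lt_0_compat; lra.
have HnR0 : 0 < INR nR by lra.
have HnR : (1 <= nR)%N.
  case: (nR) HnR0 => [|n] //=; rewrite /= => H; lra.
have HK : 2 <= INR k by have := le_INR 2 k; simpl; apply; apply/leP.
have Hln : 0 < ln (INR k) by rewrite -ln_1; apply: ln_increasing; lra.
have HT : 6 * INR nR / eps2 * ln (INR k) <= INR T.
  rewrite /T; apply: INR_nceil; apply: Rmult_lt_0_compat => //; apply: Rdiv_lt_0_compat; lra.
have Hdl : dl eps2 nR T <= / (INR k ^ 6).
  rewrite /dl /rho.
  have Hr : Rmax 0 (1 - eps2 / INR nR) <= exp (- (eps2 / INR nR)).
    apply: Rmax_lub; [left; exact: exp_pos| have := exp_ineq1_le (- (eps2 / INR nR)); lra].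
  apply: (Rle_trans _ (exp (- (eps2 / INR nR)) ^ T)).
    apply: pow_incr; split => //; exact: Rmax_l.
  rewrite exp_pow' -(exp_ln (INR k ^ 6)); last by apply: pow_lt; lra.
  rewrite -exp_Ropp ln_pow; last lra.
  apply: exp_le.
  have : 6 * ln (INR k) <= INR T * (eps2 / INR nR).
    have E : 6 * INR nR / eps2 * ln (INR k) * (eps2 / INR nR) = 6 * ln (INR k) by field; lra.
    rewrite -E; apply: Rmult_le_compat_r => //; left; apply: Rdiv_lt_0_compat; lra.
  have -> : INR 6 = 6 by simpl; ring.
  lra.
have Hcc : cc k eps2 nR T * INR k <= 1 / 8.
  rewrite /cc.
  set K := INR k in HK Hdl *.
  set d := dl eps2 nR T in Hdl *.
  have Hd0 : 0 <= d by exact: dl_ge0.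
  have HK6 : 0 < K ^ 6 by apply: pow_lt; lra.
  have Hu : / K ^ 6 * K ^ 6 = 1 by field; lra.
  have Hu0 : 0 < / K ^ 6 by apply: Rinv_0_lt_compat.
  have H1 : 16 * K ^ 2 <= K ^ 6.
    have H02 : 0 <= 2 by lra.
    have P4 := pow_incr 2 K 4 (conj H02 HK).
    have E16 : 2 ^ 4 = 16 by ring.
    have : K ^ 6 = K ^ 4 * K ^ 2 by ring.
    have : 0 <= K ^ 2 by apply: pow_le; lra.
    nra.
  have H2 : 8 * ((K + 1) * K) <= K ^ 6 by nra.
  have H3 : / K ^ 6 * ((K + 1) * K) <= 1 / 8.
    have : / K ^ 6 * (8 * ((K + 1) * K)) <= / K ^ 6 * K ^ 6 by apply: Rmult_le_compat_l; lra.
    lra.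
  have : d * ((K + 1) * K) <= / K ^ 6 * ((K + 1) * K) by apply: Rmult_le_compat_r; nra.
  nra.
rewrite /success_prob.
have Hall0 : allInv Inv [::] by [].
have -> : 7 / 8 = iidE p nP (fun _ => 7 / 8) by rewrite iid_cst.
apply: (iid_mono Hp).
- by exists (7/8) => _; rewrite Rabs_right; lra.
- apply: (bndS_of (a := 0) (b := 1)) => XP.
  exact: (@RP_bounds X Inv L k Qf orc xs eps2 nR T XP HQ Hstar Horc HnR nR [::] [::] Hall0).
move=> XP _.
have := @main X Inv L k Qf orc xs eps2 nR T XP HQ Hstar Horc Hxs He2 HnR nR [::] [::] erefl Hall0 _.
have Hc : cnt k Qf [::] = k by rewrite /cnt count_predT size_iota.
rewrite Hc.
move=> H; apply: (Rle_trans _ _ _ _ (H _)).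
  lra.
by split.
Qed.
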